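(* Let $X=\{x_1,\dots,x_n\}\subset\mathbb{R}^d$, let $t>0$ and $\sigma\ge 0$, and let $\mathbf{H}_t$ be the heat kernel of a graph on $X$ as described in the context, with heat-geodesic dissimilarity $d_t$. Suppose that either $\sigma=0$, or the manifold has uniform volume growth in the sense that $(\mathbf{H}_t)_{ii}=(\mathbf{H}_t)_{jj}$ for all $i,j$. Suppose moreover that the heat kernel is pointwise monotonically decreasing in the sense that for all $x,y,z\in X$, $\|x-y\|_2>\|x-z\|_2$ implies $\mathbf{H}_t(x,y)<\mathbf{H}_t(x,z)$. Then for all triples $x,y,z\in X$, $\|x-y\|_2>\|x-z\|_2$ implies $d_t(x,y)>d_t(x,z)$; that is, the heat-geodesic dissimilarity is order preserving.
   Context: A weighted undirected graph on $X$ is given by a symmetric nonnegative weight matrix $\mathbf{W}\in\mathbb{R}^{n\times n}$ (e.g. $\mathbf{W}_{ij}=\kappa(x_i,x_j)$ for a kernel $\kappa$). Let $\mathbf{Q}$ be the diagonal degree matrix $\mathbf{Q}_{ii}=\sum_j\mathbf{W}_{ij}$, assumed $>0$. The graph Laplacian $\mathbf{L}$ is either the combinatorial Laplacian $\mathbf{Q}-\mathbf{W}$ or the symmetric normalized Laplacian $I_n-\mathbf{Q}^{-1/2}\mathbf{W}\mathbf{Q}^{-1/2}$, and the heat kernel is the matrix exponential $\mathbf{H}_t=e^{-t\mathbf{L}}$; we write $\mathbf{H}_t(x_i,x_j)=(\mathbf{H}_t)_{ij}$. Define $(\mathbf{V}_t)_{ij}=2\,[(\mathbf{H}_t)_{ii}+(\mathbf{H}_t)_{jj}]^{-1}$.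 The heat-geodesic dissimilarity is $d_t(x_i,x_j)=\left[-4t\log(\mathbf{H}_t)_{ij}-4\sigma t\log(\mathbf{V}_t)_{ij}\right]^{1/2}$ (logarithms taken entrywise), where it is assumed that the entries of $\mathbf{H}_t$ are positive and the bracketed quantity is nonnegative, so that $d_t$ is a well-defined real number. *)

(* Defs.v *)
From HB Require Import structures.
From mathcomp Require Import all_boot all_order all_algebra.
From mathcomp Require Import all_classical all_reals all_analysis.
Set Implicit Arguments. Unset Strict Implicit. Unset Printing Implicit Defensive.
Import Order.TTheory GRing.Theory Num.Theory.
Local Open Scope ring_scope.

Section HeatGeodesic.
Variables (R : realType) (n : nat).

Definition degree_mx (W : 'M[R]_n) : 'M[R]_n :=
  \matrix_(i, j) (if i == j then \sum_(k < n) W i k else 0).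

Definition degree_invsqrt_mx (W : 'M[R]_n) : 'M[R]_n :=
  \matrix_(i, j) (if i == j then (Num.sqrt (\sum_(k < n) W i k))^-1 else 0).

Inductive laplacian_kind := Combinatorial | SymNormalized.

Definition laplacian (lk : laplacian_kind) (W : 'M[R]_n) : 'M[R]_n :=
  match lk with
  | Combinatorial => degree_mx W - W
  | SymNormalized => 1%:M - degree_invsqrt_mx W *m W *m degree_invsqrt_mx W
  end.

(* matrix exponential e^A, entrywise limit of the partial sums of
   sum_k A^k / k! (this series converges absolutely for every square A) *)
Definition expmx (A : 'M[R]_n) : 'M[R]_n :=
  \matrix_(i, j)
    limn (fun N : nat => \sum_(k < N) (A ^+ k) i j / (k`!)%:R).

Definition heat_kernel (lk : laplacian_kind) (W : 'M[R]_n) (t : R) : 'M[R]_n :=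
  expmx (- (t *: laplacian lk W)).

Definition volume_mx (H : 'M[R]_n) : 'M[R]_n :=
  \matrix_(i, j) (2 / (H i i + H j j)).

Definition heat_geodesic_sq (lk : laplacian_kind) (W : 'M[R]_n) (t sigma : R)
    (i j : 'I_n) : R :=
  - 4 * t * ln (heat_kernel lk W t i j)
  - 4 * sigma * t * ln (volume_mx (heat_kernel lk W t) i j).

Definition heat_geodesic (lk : laplacian_kind) (W : 'M[R]_n) (t sigma : R)
    (i j : 'I_n) : R :=
  Num.sqrt (heat_geodesic_sq lk W t sigma i j).

End HeatGeodesic.

Definition eucl_dist (R : realType) (d : nat) (x y : 'rV[R]_d) : R :=
  Num.sqrt (\sum_(k < d) (x ord0 k - y ord0 k) ^+ 2).

(* Main.v *)
Require Import Defs.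
From HB Require Import structures.
From mathcomp Require Import all_boot all_order all_algebra.
From mathcomp Require Import all_classical all_reals all_analysis.
From mathcomp Require Import lra.
Import Order.TTheory GRing.Theory Num.Theory.
Local Open Scope ring_scope.

Theorem proposition1 (R : realType) (n d : nat) (X : 'I_n -> 'rV[R]_d)
  (W : 'M[R]_n) (lk : laplacian_kind) (t sigma : R)
  (W_sym : forall i j, W i j = W j i)
  (W_ge0 : forall i j, 0 <= W i j)
  (Q_gt0 : forall i, 0 < \sum_(k < n) W i k)
  (t_gt0 : 0 < t) (sigma_ge0 : 0 <= sigma)
  (H_pos : forall i j, 0 < heat_kernel lk W t i j)
  (bracket_ge0 : forall i j, 0 <= heat_geodesic_sq lk W t sigma i j)
  (vol : sigma = 0 \/
         (forall i j, heat_kernel lk W t i i = heat_kernel lk W t j j))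
  (mono : forall i j k, eucl_dist (X i) (X j) > eucl_dist (X i) (X k) ->
          heat_kernel lk W t i j < heat_kernel lk W t i k) :
  forall i j k, eucl_dist (X i) (X j) > eucl_dist (X i) (X k) ->
    heat_geodesic lk W t sigma i j > heat_geodesic lk W t sigma i k.
Proof.
move=> i j k hd.
have hH := mono i j k hd.
have hln : ln (heat_kernel lk W t i j) < ln (heat_kernel lk W t i k).
  by rewrite ltr_ln // posrE.
have key : heat_geodesic_sq lk W t sigma i k < heat_geodesic_sq lk W t sigma i j.
  rewrite /heat_geodesic_sq.
  have hV : volume_mx (heat_kernel lk W t) i j = volume_mx (heat_kernel lk W t) i k
         \/ sigma = 0.
    case: vol => [->|hu]; [by right | left].
    move: (heat_kernel lk W t) hu => H hu.
    by rewrite /volume_mx !mxE (hu j i) (hu k i).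
  have hV' : sigma * t * ln (volume_mx (heat_kernel lk W t) i j)
           = sigma * t * ln (volume_mx (heat_kernel lk W t) i k).
    by case: hV => [->|->]; rewrite ?mul0r.
  move: hV' hln.
  set a := ln (heat_kernel _ _ _ i j); set b := ln (heat_kernel _ _ _ i k).
  set c1 := ln (volume_mx _ i j); set c2 := ln (volume_mx _ i k).
  move=> hV' hln.
  have E (m c : R) : m * sigma * t * c = m * (sigma * t * c) by rewrite !mulrA.
  rewrite (E _ c1) (E _ c2) hV'.
  have h4 : (-4 : R) * t < 0. by rewrite pmulr_llt0.
  by rewrite ltrD2r ltr_nM2l.
rewrite /heat_geodesic ltr_sqrt //.
exact: le_lt_trans (bracket_ge0 i k) key.
Qed.
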